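(* If $S(A)$ is an independent Stanley sequence, then $\omega(A)<\lambda(A)$ (equivalently, every element of the omitted set $O(A)$ is less than $\lambda(A)$).
   Context: A set of non-negative integers is 3-free if no three of its elements form an arithmetic progression. For a finite 3-free set $A=\{a_0<\cdots<a_k\}$ of non-negative integers, the Stanley sequence $S(A)=(a_n)_{n\ge0}$ is the increasing sequence with initial terms $a_0,\ldots,a_k$ in which each subsequent $a_{n+1}$ is the smallest integer greater than $a_n$ such that $\{a_0,\ldots,a_{n+1}\}$ is 3-free. Throughout, Stanley sequences are in root position ($a_0=0$). An integer $x$ is covered by a set $S$ if there exist $s<t$ in $S$ with $2t-s=x$. The omitted set $O(A)$ is the set of non-negative integers neither in $S(A)$ nor covered by $S(A)$; $\omega(A)$ is its largest element. A Stanley sequence $(a_n)$ is independent with character $\lambda(A)=\lambda$ if for all sufficiently large $k$: $a_{2^k+i}=a_{2^k}+a_i$ for $0\le i<2^k$, and $a_{2^k}=2a_{2^k-1}-\lambda+1$. *)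

(* Defs.v *)
From mathcomp Require Import all_boot all_order all_algebra.
Set Implicit Arguments. Unset Strict Implicit. Unset Printing Implicit Defensive.

Definition three_free (l : seq nat) : Prop :=
  forall x y z, x \in l -> y \in l -> z \in l -> x < y -> y < z ->
    x + z <> 2 * y.

Definition prefix_set (s : nat -> nat) (n : nat) : seq nat :=
  map s (iota 0 n.+1).

Definition root_3free_set (A : seq nat) : Prop :=
  [/\ A != [::], sorted ltn A, nth 0 A 0 = 0 & three_free A].

Definition stanley_seq (A : seq nat) (s : nat -> nat) : Prop :=
  (forall i, i < size A -> s i = nth 0 A i) /\
  (forall n, size A <= n.+1 ->
     [/\ s n < s n.+1,
         three_free (prefix_set s n.+1) &
         forall m, s n < m -> m < s n.+1 -> ~ three_free (rcons (prefix_set s n) m)]).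

Definition in_seq (s : nat -> nat) (x : nat) : Prop := exists i, s i = x.

Definition covered (s : nat -> nat) (x : nat) : Prop :=
  exists i j, s i < s j /\ x + s i = 2 * s j.

Definition omitted (s : nat -> nat) (x : nat) : Prop :=
  ~ in_seq s x /\ ~ covered s x.

Definition independent_with_character (s : nat -> nat) (lam : int) : Prop :=
  exists K, forall k, K <= k ->
    (forall i, i < 2 ^ k -> s (2 ^ k + i) = s (2 ^ k) + s i) /\
    ((s (2 ^ k)%N)%:Z = (2 * s (2 ^ k).-1)%N%:Z - lam + 1)%R.

(* Main.v *)
Require Import Defs.
From mathcomp Require Import all_boot all_order all_algebra.
From mathcomp Require Import zify.

Lemma prefix_mem s n v : v \in prefix_set s n -> exists2 i, i <= n & v = s i.
Proof.
rewrite /prefix_set => /mapP [i]; rewrite mem_iota add0n ltnS => /andP [_ Hi] ->.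
by exists i.
Qed.

Arguments prefix_mem {s n v}.

Lemma stan_inc A s : root_3free_set A -> stanley_seq A s -> forall i, s i < s i.+1.
Proof.
move=> [_ Hsort _ _] [Hin Hst] i.
case: (ltnP i.+1 (size A)) => Hi.
  rewrite !Hin //; last by apply: ltnW.
  apply: (sorted_ltn_nth ltn_trans) => //; rewrite inE //; exact: ltnW.
by case: (Hst i Hi).
Qed.

Lemma mono_lt s : (forall i, s i < s i.+1) -> forall i j, i < j -> s i < s j.
Proof.
move=> H i j; elim: j => [//|j IH]; rewrite ltnS leq_eqVlt => /orP [/eqP -> //|Hij].
exact: ltn_trans (IH Hij) (H j).
Qed.

Lemma mono_rev s : (forall i, s i < s i.+1) -> forall i j, s i < s j -> i < j.
Proof.
move=> H i j Hs; rewrite ltnNge; apply/negP => Hji.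
move: Hji; rewrite leq_eqVlt => /orP [/eqP E|Hji].
  by move: Hs; rewrite E ltnn.
by have := @mono_lt s H _ _ Hji; rewrite ltnNge (ltnW Hs).
Qed.

Lemma mono_le s : (forall i, s i < s i.+1) -> forall i j, i <= j -> s i <= s j.
Proof.
move=> H i j; rewrite leq_eqVlt => /orP [/eqP -> //|Hij]; exact: ltnW (@mono_lt s H _ _ Hij).
Qed.

Lemma ge_id s : (forall i, s i < s i.+1) -> forall i, i <= s i.
Proof. move=> H; elim=> [//|i IH]; exact: leq_ltn_trans IH (H i). Qed.

Arguments mono_lt {s}. Arguments mono_rev {s}. Arguments mono_le {s}. Arguments ge_id {s}.

Lemma find_gap s p m : forall d, s p < m -> m < s (p + d) -> (forall j, m <> s j) ->
  exists n, [/\ p <= n, s n < m & m < s n.+1].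
Proof.
elim=> [|d IH] H1 H2 H3; first by rewrite addn0 in H2; move: (ltn_trans H1 H2); rewrite ltnn.
case: (ltnP m (s (p + d))) => H4; first exact: IH.
exists (p + d); split => //; first exact: leq_addr.
  by rewrite ltn_neqAle H4 andbT; apply/eqP => E; apply: (H3 (p+d)).
by rewrite -addnS.
Qed.

Theorem mainTheorem11 (A : seq nat) (s : nat -> nat) (lam : int) :
  root_3free_set A -> stanley_seq A s -> independent_with_character s lam ->
  forall x : nat, omitted s x -> (x%:Z < lam)%R.
Proof.
move=> HA Hs [K HK] x [Hnin Hncov].
have inc := @stan_inc A s HA Hs.
have s0 : s 0 = 0.
  case: HA => [HA1 _ HA3 _]; case: Hs => [Hin _]; rewrite Hin //.
  by case: A HA1 {Hin HA3}.
have xpos : 0 < x by rewrite lt0n; apply/eqP => E; apply: Hnin; exists 0; rewrite E.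
case: (boolP (x%:Z < lam)%R) => // Hlx0; exfalso.
have Hlx : (lam <= x%:Z)%R by move: Hlx0; lia.
clear Hlx0.
set k := maxn K (size A + 2 * x + 2).
have [Hb HN] := HK k (leq_maxl _ _).
set N := 2 ^ k in Hb HN.
have kN : k < N := ltn_expl k (ltnSn 1).
have Nbig : size A + 2 * x + 2 < N by apply: leq_ltn_trans kN; exact: leq_maxr.
set a := s N.-1 in HN.
have Ha : N.-1 <= a := ge_id inc N.-1.
have Npos : 0 < N by lia.
have xa : x < a by lia.
set m := s N + x.
have mnot : forall j, m <> s j.
  move=> j Hj; case: (ltnP j N) => HjN.
    have : s j <= a by apply: (mono_le inc) => //; lia.
    rewrite -Hj /m; lia.
  have HjN' : j - N < N.
    case: (ltnP j (N + N.-1)) => Hj2; first lia.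
    have : s (N + N.-1) <= s j by apply: (mono_le inc).
    rewrite Hb; last lia.
    rewrite -Hj /m; lia.
  apply: Hnin; exists (j - N).
  move: Hj; rewrite -{1}(subnKC HjN) Hb // /m => /eqP; rewrite eqn_add2l => /eqP.
  by move=> ->.
have [n [Hn1 Hn2 Hn3]] : exists n, [/\ N <= n, s n < m & m < s n.+1].
  apply: (@find_gap s N m N.-1) => //; first by rewrite /m; lia.
  by rewrite Hb /m; lia.
have nlt : n < N + N.-1.
  apply: (mono_rev inc); apply: (ltn_trans Hn2); by rewrite Hb /m; lia.
case: Hs => [Hin Hst].
have [_ _ Hgr] := Hst n ltac:(lia).
apply: (Hgr m Hn2 Hn3).
have Hpre : three_free (prefix_set s n).
  case: n Hn1 Hn2 Hn3 nlt Hgr => [|n'] Hn1 *; first lia.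
  by have [_ H _] := Hst n' ltac:(lia).
have Hlt_m : forall v, v \in prefix_set s n -> v < m.
  move=> v /prefix_mem [i Hi ->]; apply: leq_ltn_trans Hn2; exact: (mono_le inc).
move=> u t z Hu Ht Hz Hut Htz Heq.
rewrite mem_rcons in_cons in Hz.
case/orP: Hz => [/eqP Ez|Hz].
  subst z.
  have Hu' : u \in prefix_set s n.
    by move: Hu; rewrite mem_rcons in_cons => /orP [/eqP E|//]; lia.
  have Ht' : t \in prefix_set s n.
    by move: Ht; rewrite mem_rcons in_cons => /orP [/eqP E|//]; lia.
  have [i Hi Ei] := prefix_mem Hu'; have [j Hj Ej] := prefix_mem Ht'.
  subst u t.
  have ij : i < j := mono_rev inc _ _ Hut.
  case: (ltnP j N) => HjN.
    have : s j <= a by apply: (mono_le inc); lia.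
    move: Heq; rewrite /m; lia.
  have Ej : s j = s N + s (j - N) by rewrite -{1}(subnKC HjN) Hb //; lia.
  case: (ltnP i N) => HiN.
    have : s i <= a by apply: (mono_le inc); lia.
    move: Heq; rewrite /m Ej; lia.
  have Ei : s i = s N + s (i - N) by rewrite -{1}(subnKC HiN) Hb //; lia.
  apply: Hncov; exists (i - N), (j - N); split.
    by move: Hut; rewrite Ei Ej ltn_add2l.
  move: Heq; rewrite /m Ei Ej; lia.
have Hu' : u \in prefix_set s n.
  by move: Hu; rewrite mem_rcons in_cons => /orP [/eqP E|//]; have := Hlt_m _ Hz; lia.
have Ht' : t \in prefix_set s n.
  by move: Ht; rewrite mem_rcons in_cons => /orP [/eqP E|//]; have := Hlt_m _ Hz; lia.
exact: (Hpre u t z Hu' Ht' Hz Hut Htz Heq).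
Qed.
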